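(* Let $q$ be a prime power for which there exist $a,b\in\mathbb F_q^*$ and integers $0<m<n<q$ such that $f(x)=ax^m+bx^n$ permutes $\mathbb F_q$. Then, for any generator $w$ of $\mathbb F_q^*$, the group $G(q)$ contains the permutation of $\mathbb F_q^*$ induced by $c\mapsto wc$, and this permutation is a $(q-1)$-cycle.
   Context: $\mathbb F_q$ is the field with $q$ elements, $\mathbb F_q^*$ its multiplicative group. A polynomial permutes $\mathbb F_q$ if the induced map on $\mathbb F_q$ is a bijection. $G(q)$ denotes the group of permutations of $\mathbb F_q^*$ generated by all permutations of $\mathbb F_q^*$ which can be represented as $c\mapsto ac^m+bc^n$ with $a,b\in\mathbb F_q^*$ and integers $0<m<n<q$. *)

(* Defs.v *)
From HB Require Import structures.
From mathcomp Require Import all_boot all_order all_algebra all_fingroup all_solvable all_field.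
Set Implicit Arguments. Unset Strict Implicit. Unset Printing Implicit Defensive.
Import GRing.Theory.
Local Open Scope ring_scope.

(* F_q is modelled by an arbitrary finite field F (q = #|F|);
   F_q^* is the unit group {unit F}. *)

Definition binom_perms (F : finFieldType) : {set {perm {unit F}}} :=
  [set s : {perm {unit F}} | [exists a : F, exists b : F,
     exists m : 'I_#|F|, exists n : 'I_#|F|,
       [&& a != 0, b != 0, (0 < m)%N, (m < n)%N &
        [forall c : {unit F},
           val (s c) == a * (val c) ^+ m + b * (val c) ^+ n]]]].

Definition Gq (F : finFieldType) : {set {perm {unit F}}} :=
  <<binom_perms F>>%g.

Definition is_cycle_of_length (T : finType) (k : nat) (s : {perm T}) : Prop :=
  exists x : T, #|porbit s x| = k /\
    (forall y : T, y \notin porbit s x -> s y = y).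

(* Main.v *)
Require Import Defs.
From HB Require Import structures.
From mathcomp Require Import all_boot all_order all_algebra all_fingroup all_solvable all_field.
Import GRing.Theory.
Local Open Scope ring_scope.

Section Aux.
Variable F : finFieldType.
Variables (a b : F) (m n : nat).
Hypotheses (ha : a != 0) (hb : b != 0) (hm : (0 < m)%N) (hmn : (m < n)%N)
  (hn : (n < #|F|)%N).
Hypothesis hf : injective (fun x : F => a * x ^+ m + b * x ^+ n).
Let f := fun x : F => a * x ^+ m + b * x ^+ n.

Lemma f_unit (c : {unit F}) : f (val c) \is a GRing.unit.
Proof.
rewrite unitfE; apply/eqP => h.
have h0 : f 0 = 0 by rewrite /f !expr0n !eqn0Ngt hm (ltn_trans hm hmn) /= !mulr0 addr0.
have e : val c = 0 := hf _ _ (etrans h (esym h0)).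
by move: (valP c); rewrite e unitfE eqxx.
Qed.

Definition fu (c : {unit F}) : {unit F} := Sub (f (val c)) (f_unit c).

Lemma fu_inj : injective fu.
Proof.
move=> x y /(congr1 val) /= /hf; exact: val_inj.
Qed.

Definition pf := perm fu_inj.

Lemma pf_in : pf \in binom_perms F.
Proof.
rewrite inE; apply/existsP; exists a; apply/existsP; exists b.
apply/existsP; exists (Ordinal (ltn_trans hmn hn)).
apply/existsP; exists (Ordinal hn).
rewrite ha hb hm hmn /=; apply/forallP => c.
by rewrite permE.
Qed.

Variable w : {unit F}.
Lemma fwu_inj : injective (fun c => fu (w * c)%g).
Proof. by move=> x y /fu_inj /mulgI. Qed.
Definition pw := perm fwu_inj.

Lemma pw_in : pw \in binom_perms F.
Proof.
have wa : a * val w ^+ m != 0 by rewrite mulf_neq0 // expf_neq0 // -unitfE (valP w).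
have wb : b * val w ^+ n != 0 by rewrite mulf_neq0 // expf_neq0 // -unitfE (valP w).
rewrite inE; apply/existsP; exists (a * val w ^+ m); apply/existsP; exists (b * val w ^+ n).
apply/existsP; exists (Ordinal (ltn_trans hmn hn)).
apply/existsP; exists (Ordinal hn).
rewrite wa wb hm hmn /=; apply/forallP => c.
by rewrite permE /= /f !exprMn !mulrA.
Qed.
End Aux.

Theorem lemma4p1 (F : finFieldType)
  (hperm : exists (a b : F) (m n : nat),
      [/\ a != 0, b != 0, (0 < m < n)%N, (n < #|F|)%N &
          bijective (fun x : F => a * x ^+ m + b * x ^+ n)])
  (w : {unit F}) (hw : generator [set: {unit F}] w) :
  exists s : {perm {unit F}},
    [/\ s \in Gq F,
        (forall c : {unit F}, s c = (w * c)%g) &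
        is_cycle_of_length (#|F| - 1)%N s].
Proof.
case: hperm => a [b [m [n [ha hb /andP[hm hmn] hn /bij_inj hf]]]].
have sinj : injective (fun c : {unit F} => (w * c)%g) by apply: mulgI.
pose s := perm sinj.
have sE : forall c, s c = (w * c)%g by move=> c; rewrite permE.
exists s; split => //.
- have -> : s = (@pw F a b m n hm hmn hf w * (@pf F a b m n hm hmn hf)^-1)%g.
    apply/permP => c; rewrite sE permM; apply/(@perm_inj _ (@pf F a b m n hm hmn hf)).
    by rewrite permKV !permE.
  rewrite /Gq groupM ?groupV ?mem_gen ?pw_in ?pf_in //.
- exists 1%g.
  have orb : forall y, y \in porbit s 1%g.
    move=> y; have : y \in <[w]>%g by rewrite -(eqP hw) inE.
    case/cycleP => k ->; apply/porbitP; exists k.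
    elim: k => [|k IH]; first by rewrite !expg0 perm1.
    by rewrite [in RHS]expgSr permM -IH sE expgS.
  split; last by move=> y; rewrite orb.
  have -> : porbit s 1%g = [set: {unit F}] by apply/setP => y; rewrite inE orb.
  by rewrite card_finField_unit subn1.
Qed.
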